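(* In the setting of the context, suppose that $\mathcal{Q}$ satisfies Condition I (for all $i\in\{1,\dots,d\}$ and all $Z\in\mathcal{Q}$, $ZR^i\in L^1$), that $\Pi^\rho_0=\{\mathbf{0}\}$, and that $\tilde{\mathcal{Q}}_{\max}\ne\emptyset$. Then the following are equivalent: (a) the market does not admit $\rho$-arbitrage; (b) $\tilde{\mathcal{Q}}\cap\mathcal{P}\ne\emptyset$ for some nonempty $\tilde{\mathcal{Q}}\subset\mathcal{Q}$ satisfying Conditions POS, MIX and INT; (c) $\tilde{\mathcal{Q}}\cap\mathcal{P}\ne\emptyset$ for all nonempty $\tilde{\mathcal{Q}}\subset\mathcal{Q}$ satisfying Conditions POS, MIX and INT.
   Context: Let $(\Omega,\mathcal{F},\mathbb{P})$ be a probability space and a market: riskless asset $S^0_0=1$, $S^0_1=1+r$, $r>-1$; risky assets $S^1,\dots,S^d$ with constants $S^i_0>0$ and real-valued $\mathcal{F}$-measurable $S^i_1$; returns $R^i:=(S^i_1-S^i_0)/S^i_0$. Standing assumptions: nonredundancy (if $\theta\in\mathbb{R}^{1+d}$ with $\sum_{i=0}^d\theta^iS^i_t=0$ a.s. for $t\in\{0,1\}$ then $\theta=0$), $R^i\in L^1$, $\mathbb{E}[R^i]\ne r$ for some $i$. Excess return of $\pi\in\mathbb{R}^d$: $X_\pi:=\pi\cdot(R-r\mathbf{1})$; $\Pi_0:=\{\pi:\mathbb{E}[X_\pi]=0\}$; $\Pi^\rho_0$ is the set of $\pi\in\Pi_0$ with $\rho(X_\pi)<\infty$ and $\rho(X_\pi)\le\rho(X_{\pi'})$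 for all $\pi'\in\Pi_0$. $L$ is a Riesz space with $L^\infty\subset L\subset L^1$ containing all $X_\pi$. $\mathcal{D}:=\{Z\in L^1:Z\ge0 \text{ a.s.},\mathbb{E}[Z]=1\}$; $\mathcal{Q}\subset\mathcal{D}$ is convex with $1\in\mathcal{Q}$ and $\rho(X)=\sup_{Z\in\mathcal{Q}}\mathbb{E}[-ZX]$ on $L$, with $\mathbb{E}[-ZX]:=\mathbb{E}[ZX^-]-\mathbb{E}[ZX^+]$ and $\mathbb{E}[-ZX]=\infty$ if $\mathbb{E}[ZX^-]=\infty$. $\mathcal{M}:=\{Z\in\mathcal{D}:\mathbb{E}[Z(R^i-r)]=0\ \forall i\}$, $\mathcal{P}:=\{Z\in\mathcal{M}:Z>0 \text{ a.s.}\}$. For $\tilde{\mathcal{Q}}\subset\mathcal{Q}$: POS: every $\tilde Z\in\tilde{\mathcal{Q}}$ satisfies $\tilde Z>0$ a.s.; MIX: $\lambda Z+(1-\lambda)\tilde Z\in\tilde{\mathcal{Q}}$ for all $Z\in\mathcal{Q}$, $\tilde Z\in\tilde{\mathcal{Q}}$, $\lambda\in(0,1)$; INT: for every $\tilde Z\in\tilde{\mathcal{Q}}$ there is an $L^\infty$-dense subset $\mathcal{E}$ of $\mathcal{D}\cap L^\infty$ such that for every $Z\in\mathcal{E}$ there is $\lambda\in(0,1)$ with $\lambda Z+(1-\lambda)\tilde Z\in\mathcal{Q}$. $\tilde{\mathcal{Q}}_{\max}$ is the set of $\tilde Z\in\mathcal{Q}$ with $\tilde Z>0$ a.s. for which there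 is an $L^\infty$-dense subset $\mathcal{E}$ of $\mathcal{D}\cap L^\infty$ such that for every $Z\in\mathcal{E}$ there is $\lambda\in(0,1)$ with $\lambda Z+(1-\lambda)\tilde Z\in\mathcal{Q}$. Strictly $\rho$-preferred, $\rho$-efficient: $\pi$ is $\rho$-efficient if $\mathbb{E}[X_\pi]\ge0$ and there is no $\pi'$ with $\mathbb{E}[X_{\pi'}]\ge\mathbb{E}[X_\pi]$, $\rho(X_{\pi'})\le\rho(X_\pi)$, one inequality strict. $\rho$-arbitrage: no $\rho$-efficient portfolio exists. *)

(* Defs.v *)
From mathcomp Require Import all_boot all_order all_algebra.
From mathcomp Require Import all_classical all_reals all_analysis.
Set Implicit Arguments. Unset Strict Implicit. Unset Printing Implicit Defensive.
Import Order.TTheory GRing.Theory Num.Theory.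
Local Open Scope classical_set_scope.
Local Open Scope ring_scope.

Section Market.
Context {d0 : measure_display} {T : measurableType d0} {R : realType}.
Variable (P : probability T R).
Variable (d : nat).

Definition ret (S0 : 'I_d -> R) (S1 : 'I_d -> T -> R) (i : 'I_d) (x : T) : R :=
  (S1 i x - S0 i) / S0 i.

Definition excess (r : R) (Ret : 'I_d -> T -> R) (pi : 'I_d -> R) (x : T) : R :=
  \sum_(i < d) pi i * (Ret i x - r).

Definition nonredundant (r : R) (S0 : 'I_d -> R) (S1 : 'I_d -> T -> R) : Prop :=
  forall (theta0 : R) (theta : 'I_d -> R),
    theta0 * 1 + \sum_(i < d) theta i * S0 i = 0 ->
    {ae P, forall x, theta0 * (1 + r) + \sum_(i < d) theta i * S1 i x = 0} ->
    theta0 = 0 /\ forall i, theta i = 0.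

Definition Dset (Z : T -> R) : Prop :=
  P.-integrable setT (EFin \o Z) /\ {ae P, forall x, 0 <= Z x} /\
  (\int[P]_x (Z x)%:E = 1)%E.

Definition EmZ (Z X : T -> R) : \bar R :=
  let a := (\int[P]_x (Z x * Num.max (- X x) 0)%:E)%E in
  let b := (\int[P]_x (Z x * Num.max (X x) 0)%:E)%E in
  if a == +oo%E then +oo%E else (a - b)%E.

Definition rho (Q : set (T -> R)) (X : T -> R) : \bar R :=
  ereal_sup [set EmZ Z X | Z in Q].

Definition Mset (r : R) (Ret : 'I_d -> T -> R) (Z : T -> R) : Prop :=
  Dset Z /\ forall i : 'I_d,
    P.-integrable setT (fun x => (Z x * (Ret i x - r))%:E) /\
    (\int[P]_x (Z x * (Ret i x - r))%:E = 0)%E.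

Definition Pset (r : R) (Ret : 'I_d -> T -> R) (Z : T -> R) : Prop :=
  Mset r Ret Z /\ {ae P, forall x, 0 < Z x}.

Definition ess_bounded (Z : T -> R) : Prop :=
  exists M : R, {ae P, forall x, `|Z x| <= M}.

Definition Linf_dense (E : set (T -> R)) : Prop :=
  E `<=` [set Z | Dset Z /\ ess_bounded Z] /\
  forall Z, Dset Z -> ess_bounded Z -> forall eps : R, 0 < eps ->
    exists2 Z', E Z' & {ae P, forall x, `|Z x - Z' x| <= eps}.

Definition mix (l : R) (Z Z' : T -> R) : T -> R :=
  fun x => l * Z x + (1 - l) * Z' x.

Definition condPOS (Qt : set (T -> R)) : Prop :=
  forall Zt, Qt Zt -> {ae P, forall x, 0 < Zt x}.

Definition condMIX (Q Qt : set (T -> R)) : Prop :=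
  forall Z Zt (l : R), Q Z -> Qt Zt -> 0 < l < 1 -> Qt (mix l Z Zt).

Definition condINT (Q Qt : set (T -> R)) : Prop :=
  forall Zt, Qt Zt -> exists E, Linf_dense E /\
    forall Z, E Z -> exists l : R, 0 < l < 1 /\ Q (mix l Z Zt).

Definition Qmax (Q : set (T -> R)) : set (T -> R) :=
  [set Zt | Q Zt /\ {ae P, forall x, 0 < Zt x} /\
    exists E, Linf_dense E /\
      forall Z, E Z -> exists l : R, 0 < l < 1 /\ Q (mix l Z Zt)].

Definition condI (Ret : 'I_d -> T -> R) (Q : set (T -> R)) : Prop :=
  forall (i : 'I_d) Z, Q Z -> P.-integrable setT (fun x => (Z x * Ret i x)%:E).

Definition Pi0 (r : R) (Ret : 'I_d -> T -> R) (pi : 'I_d -> R) : Prop :=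
  (\int[P]_x (excess r Ret pi x)%:E = 0)%E.

Definition Pirho0 (Q : set (T -> R)) (r : R) (Ret : 'I_d -> T -> R)
    (pi : 'I_d -> R) : Prop :=
  Pi0 r Ret pi /\ (rho Q (excess r Ret pi) < +oo)%E /\
  forall pi', Pi0 r Ret pi' -> (rho Q (excess r Ret pi) <= rho Q (excess r Ret pi'))%E.

Definition rho_efficient (Q : set (T -> R)) (r : R) (Ret : 'I_d -> T -> R)
    (pi : 'I_d -> R) : Prop :=
  (0 <= \int[P]_x (excess r Ret pi x)%:E)%E /\
  ~ exists pi' : 'I_d -> R,
      let m := (\int[P]_x (excess r Ret pi x)%:E)%E in
      let m' := (\int[P]_x (excess r Ret pi' x)%:E)%E in
      let p := rho Q (excess r Ret pi) in
      let p' := rho Q (excess r Ret pi') in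
      (m <= m')%E /\ (p' <= p)%E /\ ((m < m')%E \/ (p' < p)%E).

Definition rho_arbitrage (Q : set (T -> R)) (r : R) (Ret : 'I_d -> T -> R) : Prop :=
  ~ exists pi, rho_efficient Q r Ret pi.

End Market.

(* Main.v *)
Require Import Defs.
From mathcomp Require Import all_boot all_order all_algebra.
From mathcomp Require Import all_classical all_reals all_analysis.
From mathcomp Require Import measurable_realfun.
From mathcomp Require Import ring lra.
Set Implicit Arguments. Unset Strict Implicit. Unset Printing Implicit Defensive.
Import Order.TTheory GRing.Theory Num.Theory.
Import numFieldNormedType.Exports.
Local Open Scope classical_set_scope.
Local Open Scope ring_scope.
Section Sep.
Variable R : realType.

Definition convexS n (C : set 'rV[R]_n) :=
  forall x y (t : R), C x -> C y -> 0 <= t <= 1 -> C (t *: x + (1 - t) *: y).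

Lemma conv_comb n (C : set 'rV[R]_n) : convexS C -> forall m (l : 'I_m.+1 -> R) (c : 'I_m.+1 -> 'rV[R]_n),
  (forall i, 0 <= l i) -> \sum_i l i = 1 -> (forall i, C (c i)) -> C (\sum_i l i *: c i).
Proof.
move=> cC; elim=> [|m IH] l c l0 l1 cc.
  by move: l1; rewrite !big_ord1 => ->; rewrite scale1r.
rewrite big_ord_recr /=; rewrite big_ord_recr /= in l1.
set s := \sum_(i < m.+1) l (widen_ord (leqnSn m.+1) i) in l1 *.
have s0 : 0 <= s by apply: sumr_ge0 => i _.
have [s00|sp] := eqVneq s 0.
  have z : forall i : 'I_m.+1, l (widen_ord (leqnSn m.+1) i) = 0.
    by move=> i; move/eqP: s00; rewrite psumr_eq0 // => /allP /(_ i (mem_index_enum _)) /eqP.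
  rewrite big1 ?add0r; last by move=> i _; rewrite z scale0r.
  by move: l1; rewrite s00 add0r => ->; rewrite scale1r.
have spos : 0 < s by rewrite lt_def sp s0.
have -> : \sum_(i < m.+1) l (widen_ord (leqnSn m.+1) i) *: c (widen_ord (leqnSn m.+1) i)
   = s *: \sum_(i < m.+1) (l (widen_ord (leqnSn m.+1) i) / s) *: c (widen_ord (leqnSn m.+1) i).
  rewrite scaler_sumr; apply: eq_bigr => i _; rewrite scalerA; congr (_ *: _).
  by rewrite mulrC divfK.
have -> : l ord_max = 1 - s by rewrite -l1 addrC addrK.
apply: cC => //; last first.
  by rewrite s0 /= -l1 lerDl.
apply: IH => //.
  by move=> i; rewrite divr_ge0.
by rewrite -mulr_suml -/s mulfV.
Qed.

Lemma cont_sum (U : topologicalType) (I : Type) (s : seq I) (F : I -> U -> R) :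
  (forall i, continuous (F i)) -> continuous (fun x => \sum_(i <- s) F i x).
Proof.
move=> Fc; elim: s => [|a s IH].
  have -> : (fun x => \sum_(i <- [::]) F i x) = (fun=> 0) by apply: funext => x; rewrite big_nil.
  by move=> x; apply: cst_continuous.
have -> : (fun x => \sum_(i <- a :: s) F i x) = (fun x => F a x + \sum_(i <- s) F i x).
  by apply: funext => x; rewrite big_cons.
by move=> x; apply: continuousD; [apply: Fc | apply: IH].
Qed.

Lemma finsep n m (C : set 'rV[R]_n) (c : 'I_m.+1 -> 'rV[R]_n) :
  convexS C -> ~ C 0 -> (forall i, C (c i)) ->
  exists p : 'rV[R]_n, p != 0 /\ forall i, 0 < \sum_j p 0 j * c i 0 j.
Proof.
move=> cC nC cc.
pose G (l : 'rV[R]_m.+1) (j : 'I_n) := \sum_k l 0 k * c k 0 j.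
pose f l := \sum_j (G l j)^+2.
pose D := [set l : 'rV[R]_m.+1 | (forall k, 0 <= l 0 k) /\ \sum_k l 0 k = 1].
have fc : continuous f.
  have Gc : forall j, continuous (fun l => G l j).
    move=> j; apply: cont_sum => k x.
    apply: (@continuousM R _ (fun l : 'rV[R]_m.+1 => l 0 k) (fun=> c k 0 j)).
      exact: coord_continuous.
    exact: cst_continuous.
  apply: cont_sum => j.
  have -> : (fun l => G l j ^+ 2) = (fun l => G l j * G l j).
    by apply: funext => l; rewrite expr2.
  move=> x; apply: (@continuousM R _ (fun l => G l j) (fun l => G l j)); exact: Gc.
have Dcl : closed D.
  have -> : D = (\bigcap_(k in setT) [set l : 'rV[R]_m.+1 | 0 <= l 0 k])
        `&` [set l : 'rV[R]_m.+1 | \sum_k l 0 k = 1].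
    by apply/seteqP; split => l /= [h1 h2]; split => // k; [move=> _; exact: h1 | exact: h1].
  apply: closedI.
    apply: closed_bigI => k _.
    apply: (@preimage_closed _ _ (fun l : 'rV[R]_m.+1 => l 0 k) [set x | 0 <= x]).
      by move=> l _; apply: coord_continuous.
    exact: closed_ge.
  apply: (@preimage_closed _ _ (fun l : 'rV[R]_m.+1 => \sum_k l 0 k) [set x | x = 1]).
    by move=> l _; apply: cont_sum => k; apply: coord_continuous.
  exact: closed_eq.
have Dsub : D `<=` [set v | forall k, `[(0:R), 1]%classic (v ord0 k)].
  move=> l [l0 l1] k /=; rewrite in_itv /= l0 /= -l1.
  rewrite (bigD1 k) //= lerDl; apply: sumr_ge0 => i _; exact: l0.
have Dco : compact D.
  apply: (subclosed_compact Dcl _ Dsub).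
  apply: (@rV_compact _ _ (fun=> `[(0:R), 1]%classic)) => _; exact: segment_compact.
have D0 : D !=set0.
  exists (\row_k (k == ord0)%:R); split => [k|]; first by rewrite mxE ler0n.
  rewrite (bigD1 ord0) //= mxE eqxx big1 ?addr0 // => k /negbTE kn; by rewrite mxE kn.
have [ls lsD lsmin] := EVT_min_rV D0 Dco (continuous_subspaceT fc).
move: lsD; rewrite inE => -[ls0 ls1].
pose p := \row_j G ls j.
have pE : p = \sum_k ls 0 k *: c k.
  by apply/rowP => j; rewrite !mxE summxE; apply: eq_bigr => k _; rewrite !mxE.
have Cp : C p by rewrite pE; apply: conv_comb.
have p0 : p != 0 by apply/eqP => h; apply: nC; rewrite -h.
exists p; split => // i.
pose q j := c i 0 j - p 0 j.
pose A := \sum_j (p 0 j)^+2.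
pose B := \sum_j p 0 j * q j.
pose Cc := \sum_j q j ^+ 2.
have Apos : 0 < A.
  rewrite lt_def sumr_ge0 ?andbT; last by move=> j _; rewrite sqr_ge0.
  apply/negP; rewrite psumr_eq0; last by move=> j _; rewrite sqr_ge0.
  move=> /allP h; move/eqP: p0; apply; apply/rowP => j; rewrite mxE.
  by have := h j (mem_index_enum _); rewrite /= sqrf_eq0 mxE => /eqP ->; rewrite mxE.
have Cc0 : 0 <= Cc by apply: sumr_ge0 => j _; rewrite sqr_ge0.
have ind : forall (F : 'I_m.+1 -> R), \sum_k (k == i)%:R * F k = F i.
  move=> F; rewrite (bigD1 i) //= eqxx mul1r big1 ?addr0 //.
  by move=> k /negbTE ->; rewrite mul0r.
have key : forall t, 0 < t <= 1 -> 0 <= t * (2 * B + t * Cc).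
  move=> t /andP[t0 t1].
  pose lt := \row_k ((1 - t) * ls 0 k + t * (k == i)%:R).
  have ltD : lt \in D.
    rewrite inE; split => [k|].
      rewrite mxE; apply: addr_ge0; apply: mulr_ge0 => //; try lra; exact: ler0n.
    rewrite (eq_bigr (fun k => (1 - t) * ls 0 k + t * (k == i)%:R)); last by move=> k _; rewrite mxE.
    rewrite big_split /= -mulr_sumr ls1 -mulr_sumr (bigD1 i) //= eqxx big1 ?addr0.
      by rewrite mulr1 mulr1 subrK.
    by move=> k /negbTE ->.
  have Glt : forall j, G lt j = p 0 j + t * q j.
    move=> j; rewrite /G (eq_bigr (fun k => (1 - t) * (ls 0 k * c k 0 j) + t * ((k == i)%:R * c k 0 j))); last first.
      by move=> k _; rewrite mxE; ring.
    rewrite big_split /= -!mulr_sumr ind.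
    rewrite /q !mxE /G; ring.
  have := lsmin lt ltD.
  have -> : f lt = \sum_j (p 0 j + t * q j) ^+ 2 by apply: eq_bigr => j _; rewrite Glt.
  have -> : f ls = A by apply: eq_bigr => j _; rewrite mxE.
  rewrite -subr_ge0 -sumrB.
  rewrite (eq_bigr (fun j => t * (2 * (p 0 j * q j) + t * q j ^+ 2))); last by move=> j _; ring.
  by rewrite -mulr_sumr big_split /= -!mulr_sumr.
have B0 : 0 <= B.
  rewrite leNgt; apply/negP => Bn.
  pose t := - B / (Cc - B + 1).
  have den : 0 < Cc - B + 1 by lra.
  have t0 : 0 < t by rewrite /t divr_gt0 // oppr_gt0.
  have t1 : t <= 1 by rewrite /t ler_pdivrMr // mul1r; lra.
  have := key t; rewrite t0 t1 => /(_ isT).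
  have tC : t * Cc <= - B.
    have tden : t * (Cc - B + 1) = - B by rewrite /t divfK // gt_eqF.
    nra.
  rewrite pmulr_rge0 //; lra.
have -> : \sum_j p 0 j * c i 0 j = A + B.
  rewrite /A /B -big_split /=; apply: eq_bigr => j _; rewrite /q; ring.
lra.
Qed.

Definition dotr n (p c : 'rV[R]_n) := \sum_j p 0 j * c 0 j.

Lemma dotr_cont n (c : 'rV[R]_n) : continuous (fun p : 'rV[R]_n => dotr p c).
Proof.
apply: cont_sum => j x.
apply: (@continuousM R _ (fun l : 'rV[R]_n => l 0 j) (fun=> c 0 j)).
  exact: coord_continuous.
exact: cst_continuous.
Qed.

Lemma sqsum_cont n : continuous (fun p : 'rV[R]_n => \sum_j p 0 j ^+ 2).
Proof.
apply: cont_sum => j.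
have -> : (fun l : 'rV[R]_n => l 0 j ^+ 2) = (fun l => l 0 j * l 0 j).
  by apply: funext => l; rewrite expr2.
move=> x; apply: (@continuousM R _ (fun l : 'rV[R]_n => l 0 j) (fun l => l 0 j));
  exact: coord_continuous.
Qed.

Lemma sep n (C : set 'rV[R]_n.+1) : convexS C -> ~ C 0 ->
  exists p : 'rV[R]_n.+1, p != 0 /\ forall c, C c -> 0 <= dotr p c.
Proof.
move=> cC nC.
have [[c0 Cc0]|C0] := pselect (C !=set0); last first.
  exists (const_mx 1); split => [|c Cc]; last by exfalso; apply: C0; exists c.
  by apply/eqP => /matrixP /(_ 0 0); rewrite !mxE => /eqP; rewrite oner_eq0.
pose S := [set p : 'rV[R]_n.+1 | \sum_j p 0 j ^+ 2 = 1].
have Scl : closed S.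
  apply: (@preimage_closed _ _ (fun p : 'rV[R]_n.+1 => \sum_j p 0 j ^+ 2) [set x | x = 1]).
    by move=> l _; apply: sqsum_cont.
  exact: closed_eq.
have Ssub : S `<=` [set v | forall k, `[(-1:R), 1]%classic (v ord0 k)].
  move=> l l1 k /=; rewrite in_itv /=.
  have : l 0 k ^+ 2 <= 1.
    rewrite -l1 (bigD1 k) //= lerDl; apply: sumr_ge0 => i _; exact: sqr_ge0.
  move=> h; apply/andP; split; nra.
have Sco : compact S.
  apply: (subclosed_compact Scl _ Ssub).
  apply: (@rV_compact _ _ (fun=> `[(-1:R), 1]%classic)) => _; exact: segment_compact.
pose F (c : 'rV[R]_n.+1) := S `&` [set p | 0 <= dotr p c].
have cfam : closed_fam_of S C F.
  exists (fun c => [set p | 0 <= dotr p c]) => // c _.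
  apply: (@preimage_closed _ _ (fun p => dotr p c) [set x | 0 <= x]).
    by move=> l _; apply: dotr_cont.
  exact: closed_ge.
have fI : finI C F.
  move=> D' sub.
  case E: (finmap.enum_fset D') => [|a s].
    exists 0 => i /= iD; exfalso.
    by have : i \in finmap.enum_fset D' := iD; rewrite E.
  pose c (k : 'I_(size s).+1) := nth 0 (a :: s) k.
  have cCk : forall k, C (c k).
    move=> k; apply: set_mem; apply: sub.
    have : c k \in finmap.enum_fset D' by rewrite E; exact: mem_nth.
    by [].
  have [p [p0 pc]] := finsep cC nC cCk.
  pose A := \sum_j p 0 j ^+ 2.
  have Apos : 0 < A.
    rewrite lt_def sumr_ge0 ?andbT; last by move=> j _; rewrite sqr_ge0.
    apply/negP; rewrite psumr_eq0; last by move=> j _; rewrite sqr_ge0.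
    move=> /allP h; move/eqP: p0; apply; apply/rowP => j.
    by have := h j (mem_index_enum _); rewrite /= sqrf_eq0 => /eqP ->; rewrite mxE.
  pose sA := Num.sqrt A.
  have sA0 : 0 < sA by rewrite sqrtr_gt0.
  exists (sA^-1 *: p) => i /= iD; split.
    rewrite /S /= (eq_bigr (fun j => sA^-2 * p 0 j ^+ 2)); last first.
      by move=> j _; rewrite mxE exprMn exprVn.
    by rewrite -mulr_sumr -/A sqr_sqrtr ?(ltW Apos) // mulVf // gt_eqF.
  have : i \in finmap.enum_fset D' := iD.
  rewrite E -index_mem => {}iD.
  have -> : i = c (Ordinal iD) by rewrite /c /= nth_index // -index_mem.
  rewrite /= /dotr (eq_bigr (fun j => sA^-1 * (p 0 j * c (Ordinal iD) 0 j))); last first.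
    by move=> j _; rewrite mxE mulrA.
  by rewrite -mulr_sumr mulr_ge0 ?invr_ge0 ?(ltW sA0) // ltW // pc.
have := Sco; rewrite compact_In0 => /(_ _ C F cfam fI) [p pF].
exists p; split.
  have [pS _] := pF c0 Cc0.
  apply/eqP => p0; move: pS; rewrite /S /= p0 big1 => [/eqP|j _]; first by rewrite eq_sym oner_eq0.
  by rewrite mxE expr0n.
by move=> c Cc; have [_] := pF c Cc.
Qed.
End Sep.

Section Meas.
Context {d0 : measure_display} {T : measurableType d0} {R : realType}.
Variable (P : probability T R).

Definition integ (f : T -> R) := P.-integrable setT (EFin \o f).
Definition vI (f : T -> R) : R := fine (\int[P]_x (f x)%:E).

Lemma integE f : integ f -> (\int[P]_x (f x)%:E = (vI f)%:E)%E.
Proof. by move=> h; rewrite /vI fineK //; exact: (integrable_fin_num measurableT h). Qed.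

Lemma integ_meas f : integ f -> measurable_fun setT f.
Proof. by move=> /measurable_int /measurable_EFinP. Qed.

Lemma integ_ext f g : (forall x, f x = g x) -> integ f -> integ g.
Proof. by move=> fg; apply: eq_integrable => // x _ /=; rewrite fg. Qed.

Lemma vI_ext f g : (forall x, f x = g x) -> vI f = vI g.
Proof. by move=> fg; rewrite /vI; congr fine; apply: eq_integral => x _; rewrite fg. Qed.

Lemma integD f g : integ f -> integ g -> integ (fun x => f x + g x).
Proof. by move=> hf hg; apply: eq_integrable (integrableD measurableT hf hg) => // x _. Qed.

Lemma vID f g : integ f -> integ g -> vI (fun x => f x + g x) = vI f + vI g.
Proof.
move=> hf hg; apply: EFin_inj; rewrite -integE; last exact: integD.
by rewrite EFinD -!integE // -integralD.
Qed.

Lemma integZ k f : integ f -> integ (fun x => k * f x).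
Proof. by move=> hf; apply: eq_integrable (integrableZl measurableT k hf) => // x _. Qed.

Lemma vIZ k f : integ f -> vI (fun x => k * f x) = k * vI f.
Proof.
move=> hf; apply: EFin_inj; rewrite -integE; last exact: integZ.
by rewrite EFinM -!integE // -integralZl.
Qed.

Lemma integ_cst k : integ (fun _ => k).
Proof. exact: finite_measure_integrable_cst. Qed.

Lemma vI_cst k : vI (fun _ => k) = k.
Proof.
apply: EFin_inj; rewrite -integE; last exact: integ_cst.
by rewrite (integral_cst P measurableT k%:E) /= probability_setT mule1.
Qed.

Lemma integN f : integ f -> integ (fun x => - f x).
Proof. by move=> h; apply: integ_ext (integZ (-1) h) => x; rewrite mulN1r. Qed.

Lemma vIN f : integ f -> vI (fun x => - f x) = - vI f.
Proof. by move=> h; rewrite -mulN1r -vIZ //; apply: vI_ext => x; rewrite mulN1r. Qed.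

Lemma integB f g : integ f -> integ g -> integ (fun x => f x - g x).
Proof. by move=> hf hg; apply: integD => //; exact: integN. Qed.

Lemma vIB f g : integ f -> integ g -> vI (fun x => f x - g x) = vI f - vI g.
Proof. by move=> hf hg; rewrite vID ?vIN //; exact: integN. Qed.

Lemma integ_sum (I : Type) (s : seq I) (F : I -> T -> R) :
  (forall i, integ (F i)) -> integ (fun x => \sum_(i <- s) F i x).
Proof.
move=> hF; elim: s => [|a s IH].
  by apply: integ_ext (integ_cst 0) => x; rewrite big_nil.
by apply: integ_ext (integD (hF a) IH) => x; rewrite big_cons.
Qed.

Lemma vI_sum (I : Type) (s : seq I) (F : I -> T -> R) :
  (forall i, integ (F i)) -> vI (fun x => \sum_(i <- s) F i x) = \sum_(i <- s) vI (F i).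
Proof.
move=> hF; elim: s => [|a s IH].
  by rewrite big_nil (vI_ext (g := fun _ => 0)) ?vI_cst // => x; rewrite big_nil.
rewrite big_cons -IH -vID //; last exact: integ_sum.
by apply: vI_ext => x; rewrite big_cons.
Qed.

Lemma vI_ae f g : integ f -> measurable_fun setT g -> {ae P, forall x, f x = g x} ->
  integ g /\ vI f = vI g.
Proof.
move=> hf mg ae.
have aee : ae_eq P setT (EFin \o f) (EFin \o g).
  by apply: filterS ae => x /= -> _.
have ig : integ g.
  apply/integrableP; split; first exact/measurable_EFinP.
  have /integrableP [_ lt] := hf.
  rewrite (ae_eq_integral (abse \o (EFin \o f))) //.
  - apply: measurableT_comp => //; exact/measurable_EFinP.
  - apply: measurableT_comp => //; apply: measurable_int hf.
  apply: filterS aee => x h Tx; have hx : (f x)%:E = (g x)%:E := h Tx.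
  by change (abse (g x)%:E = abse (f x)%:E); rewrite hx.
split => //; apply: EFin_inj; rewrite -!integE //.
apply: ae_eq_integral => //; [apply: measurable_int hf|exact/measurable_EFinP].

Qed.

Lemma vI_ge0 f : integ f -> {ae P, forall x, 0 <= f x} -> 0 <= vI f.
Proof.
move=> hf ae.
have mf := integ_meas hf.
have [ig ->] : integ (fun x => Num.max (f x) 0) /\ vI f = vI (fun x => Num.max (f x) 0).
  apply: vI_ae => //; first exact: measurable_maxr.
  by apply: filterS ae => x h; rewrite max_l.
rewrite -lee_fin -integE //; apply: integral_ge0 => x _; rewrite lee_fin.
by rewrite le_max lexx orbT.
Qed.

Lemma vI_le f g : integ f -> integ g -> {ae P, forall x, f x <= g x} -> vI f <= vI g.
Proof.
move=> hf hg ae; rewrite -subr_ge0 -vIB //; apply: vI_ge0; first exact: integB.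
by apply: filterS ae => x; rewrite subr_ge0.
Qed.

Lemma vI_eq0 f : integ f -> {ae P, forall x, 0 <= f x} -> vI f = 0 ->
  {ae P, forall x, f x = 0}.
Proof.
move=> hf ae f0.
have mf := integ_meas hf.
have : ae_eq P setT (EFin \o f) (cst 0%E).
  apply/(ae_eq_integral_abs P measurableT); first exact/measurable_EFinP.
  rewrite (ae_eq_integral (EFin \o f)) //.
  - by rewrite integE // f0.
  - apply: measurableT_comp => //; exact/measurable_EFinP.
  - exact/measurable_EFinP.
  apply: filterS ae => x h _.
  by change (abse (f x)%:E = (f x)%:E); rewrite gee0_abs // lee_fin.
by apply: filterS => x /(_ I) [].
Qed.

End Meas.
Arguments integE {d0 T R P} {f}.
Arguments integ_meas {d0 T R P} {f}.
Arguments integ_ext {d0 T R P} {f g}.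
Arguments vI_ext {d0 T R P} {f g}.
Arguments integD {d0 T R P} {f g}.
Arguments vID {d0 T R P} {f g}.
Arguments integZ {d0 T R P} k {f}.
Arguments vIZ {d0 T R P} k {f}.
Arguments integ_cst {d0 T R P} k.
Arguments vI_cst {d0 T R P} k.
Arguments integN {d0 T R P} {f}.
Arguments vIN {d0 T R P} {f}.
Arguments integB {d0 T R P} {f g}.
Arguments vIB {d0 T R P} {f g}.
Arguments integ_sum {d0 T R P} {I} s {F}.
Arguments vI_sum {d0 T R P} {I} s {F}.
Arguments vI_ae {d0 T R P} {f g}.
Arguments vI_ge0 {d0 T R P} {f}.
Arguments vI_le {d0 T R P} {f g}.
Arguments vI_eq0 {d0 T R P} {f}.

Lemma max_diff (R : realType) (y : R) : Num.max (- y) 0 - Num.max y 0 = - y.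
Proof.
have [y0|/negP y0] := boolP (0 <= y); last (have {}y0 : y < 0 by rewrite ltNge; apply/negP).
  have -> : Num.max (- y) 0 = 0 by apply: max_r; rewrite oppr_le0.
  have -> : Num.max y 0 = y by apply: max_l.
  by rewrite sub0r.
have -> : Num.max (- y) 0 = - y by apply: max_l; rewrite oppr_ge0 ltW.
have -> : Num.max y 0 = 0 by apply: max_r; rewrite ltW.
by rewrite subr0.
Qed.

Lemma max_abs (R : realType) (y : R) : `|Num.max y 0| <= `|y|.
Proof.
have [y0|/negP y0] := boolP (0 <= y); last (have {}y0 : y < 0 by rewrite ltNge; apply/negP).
  by have -> : Num.max y 0 = y by apply: max_l.
have -> : Num.max y 0 = 0 by apply: max_r; rewrite ltW.
by rewrite normr0.
Qed.

Section Main.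
Context {d0 : measure_display} {T : measurableType d0} {R : realType}.
Variables (P : probability T R) (d : nat) (r : R) (S0 : 'I_d -> R)
  (S1 : 'I_d -> T -> R) (Q : set (T -> R)).
Hypothesis hRet : forall i, P.-integrable setT (EFin \o ret S0 S1 i).
Hypothesis hQD : Q `<=` Dset P.
Hypothesis hmix : forall Z1 Z2 (l : R), Q Z1 -> Q Z2 -> 0 <= l <= 1 -> Q (mix l Z1 Z2).
Hypothesis hQ1 : Q (fun _ => 1).
Hypothesis hI : condI P (ret S0 S1) Q.

Local Notation Ret := (ret S0 S1).
Local Notation ex pi := (excess r (ret S0 S1) pi).

Definition vv (Z : T -> R) (i : 'I_d) := vI P (fun x => Z x * (Ret i x - r)).
Definition dotp (pi : 'I_d -> R) Z := \sum_i pi i * vv Z i.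
Definition goodZ Z := forall i, integ P (fun x => Z x * (Ret i x - r)).

Lemma goodQ Z : Q Z -> goodZ Z.
Proof.
move=> QZ i; have [iZ _] := hQD QZ; have iZR := hI i QZ.
apply: integ_ext (integB iZR (integZ r iZ)) => x.
by rewrite mulrBr [r * _]mulrC.
Qed.

Lemma good1 : goodZ (fun _ => 1).
Proof. exact: goodQ. Qed.

Lemma integ_Zex Z pi : goodZ Z ->
  integ P (fun x => Z x * ex pi x) /\ vI P (fun x => Z x * ex pi x) = dotp pi Z.
Proof.
move=> gZ.
have e : forall x, \sum_(i <- index_enum 'I_d) pi i * (Z x * (Ret i x - r)) = Z x * ex pi x.
  by move=> x; rewrite /excess mulr_sumr; apply: eq_bigr => i _; ring.
have hs : forall i, integ P (fun x => pi i * (Z x * (Ret i x - r))) by move=> i; apply: integZ.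
split; first by apply: integ_ext (integ_sum _ hs).
rewrite -(vI_ext e) vI_sum //; apply: eq_bigr => i _; rewrite vIZ //.
Qed.

Lemma integ_ex pi : integ P (ex pi) /\ vI P (ex pi) = dotp pi (fun _ => 1).
Proof.
have [h1 h2] := integ_Zex pi good1.
split; first by apply: integ_ext h1 => x; rewrite mul1r.
by rewrite -h2; apply: vI_ext => x; rewrite mul1r.
Qed.

Lemma mean_ex pi : (\int[P]_x (ex pi x)%:E = (dotp pi (fun _ => 1))%:E)%E.
Proof. by have [h1 h2] := integ_ex pi; rewrite integE // h2. Qed.

Lemma EmZ_gen Z X : integ P Z -> measurable_fun setT X -> integ P (fun x => Z x * X x) ->
  EmZ P Z X = (- vI P (fun x => Z x * X x))%:E.
Proof.
move=> iZ mX iZX.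
have mZ := integ_meas iZ.
have ia : integ P (fun x => Z x * Num.max (- X x) 0).
  apply: le_integrable (iZX) => //.
    apply/measurable_EFinP; apply: measurable_funM => //.
    apply: measurable_maxr => //; exact: measurableT_comp.
  move=> x _ /=; rewrite lee_fin !normrM ler_wpM2l //.
  by apply: le_trans (max_abs _) _; rewrite normrN.
have ib : integ P (fun x => Z x * Num.max (X x) 0).
  apply: le_integrable (iZX) => //.
    apply/measurable_EFinP; apply: measurable_funM => //.
    exact: measurable_maxr.
  by move=> x _ /=; rewrite lee_fin !normrM ler_wpM2l // max_abs.
rewrite /EmZ /= integE // integE //; rewrite -EFinB; congr EFin.
rewrite -vIB // -vIN //; apply: vI_ext => x; rewrite -mulrBr max_diff; ring.
Qed.

Lemma EmZ_Q Z pi : Q Z -> EmZ P Z (ex pi) = (- dotp pi Z)%:E.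
Proof.
move=> QZ; have [iZ _] := hQD QZ; have [h1 h2] := integ_Zex pi (goodQ QZ).
have [iX _] := integ_ex pi.
by rewrite (EmZ_gen iZ (integ_meas iX) h1) h2.
Qed.

Lemma rho_ge Z pi : Q Z -> ((- dotp pi Z)%:E <= rho P Q (ex pi))%E.
Proof. by move=> QZ; rewrite -EmZ_Q //; apply: ereal_sup_ubound; exists Z. Qed.

Lemma rho_le pi c : (forall Z, Q Z -> - dotp pi Z <= c) -> (rho P Q (ex pi) <= c%:E)%E.
Proof.
by move=> h; apply: ge_ereal_sup => _ [Z QZ <-]; rewrite EmZ_Q // lee_fin h.
Qed.

Lemma dotpD pi1 pi2 Z : dotp (fun i => pi1 i + pi2 i) Z = dotp pi1 Z + dotp pi2 Z.
Proof. by rewrite /dotp -big_split; apply: eq_bigr => i _; rewrite mulrDl. Qed.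

Lemma vv_mix l Z1 Z2 i : goodZ Z1 -> goodZ Z2 ->
  vv (mix l Z1 Z2) i = l * vv Z1 i + (1 - l) * vv Z2 i.
Proof.
move=> g1 g2; rewrite /vv -!vIZ // -vID; try by apply: integZ.
by apply: vI_ext => x; rewrite /mix; ring.
Qed.


Lemma dotp_mix pi l Z1 Z2 : goodZ Z1 -> goodZ Z2 ->
  dotp pi (mix l Z1 Z2) = l * dotp pi Z1 + (1 - l) * dotp pi Z2.
Proof.
move=> g1 g2; rewrite /dotp !mulr_sumr -big_split; apply: eq_bigr => i _.
by rewrite vv_mix // mulrDr !mulrA [pi i * l]mulrC [pi i * (1 - l)]mulrC.
Qed.

Lemma imp1 : Qmax P Q `<=` Q /\ condPOS P (Qmax P Q) /\ condMIX Q (Qmax P Q)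
  /\ condINT P Q (Qmax P Q).
Proof.
split; first by move=> Z [].
split; first by move=> Z [_ []].
split; last by move=> Z [_ [_ h]].
move=> Z Zt l QZ [QZt [pos [E [dE hE]]]] /andP[l0 l1].
split; first by apply: hmix => //; apply/andP; split; apply: ltW.
split.
  have [_ [aeZ _]] := hQD QZ.
  by apply: filterS2 aeZ pos => x h1 h2; rewrite /mix; nra.
exists E; split => // Z' EZ'.
have [la [/andP[la0 la1] QY]] := hE Z' EZ'.
pose lp := la * (1 - l) / 2.
pose al := (1 - l) / 2.
pose b := (2 - la * (1 - l)) * l / (1 + l).
exists lp; split.
  by apply/andP; split; rewrite /lp; [apply: divr_gt0; nra | rewrite ltr_pdivrMr //; nra].
have QU : Q (mix b Z Zt).
  apply: hmix => //; apply/andP; split.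
    by rewrite /b; apply: divr_ge0; nra.
  have h1 : 0 <= la * l * (1 - l) by apply: mulr_ge0; [apply: mulr_ge0|]; lra.
  rewrite /b ler_pdivrMr; nra.
have := hmix QY QU (_ : 0 <= al <= 1); rewrite /al => /(_ ltac:(apply/andP; split; lra)).
congr Q; apply: funext => x; rewrite /mix /lp /b.
have : 1 + l != 0 by rewrite gt_eqF //; lra.
move=> h; field; exact: h.
Qed.


Lemma imp2 : (exists Qt, Qt `<=` Q /\ Qt !=set0 /\ condPOS P Qt /\ condMIX Q Qt
   /\ condINT P Q Qt /\ (Qt `&` Pset P r Ret) !=set0) -> ~ rho_arbitrage P Q r Ret.
Proof.
move=> [Qt [sQ [_ [pos [_ [int [Zt [QtZt PZt]]]]]]]] arb; apply: arb.
pose pi0 := fun _ : 'I_d => (0 : R).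
have dot0 : forall Z, dotp pi0 Z = 0 by move=> Z; rewrite /dotp big1 // => i _; rewrite mul0r.
have rho0 : (rho P Q (ex pi0) <= 0%:E)%E by apply: rho_le => Z _; rewrite dot0 oppr0.
exists pi0; split; first by rewrite mean_ex dot0.
move=> [pi' /=]; rewrite !mean_ex dot0 => -[h1 [h2 h3]].
have h2' := le_trans h2 rho0.
have nonneg : forall Z, Q Z -> 0 <= dotp pi' Z.
  move=> Z QZ; have := le_trans (rho_ge pi' QZ) h2'; rewrite lee_fin; lra.
have mpos : 0 < dotp pi' (fun _ => 1).
  rewrite lee_fin in h1; rewrite lt_def h1 andbT; apply/eqP => m0.
  case: h3 => [|h3]; first by rewrite m0 ltxx.
  have := lt_le_trans (le_lt_trans (rho_ge pi' hQ1) h3) rho0.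
  by rewrite m0 oppr0 ltxx.
have [[iZt [_ _]] hZt] := PZt.1.
have posZt := PZt.2.
have gZt : goodZ Zt by move=> i; case: (hZt i).
have vZt : forall i, vv Zt i = 0.
  by move=> i; rewrite /vv /vI; case: (hZt i) => _ ->.
have [iZtX vZtX] := integ_Zex pi' gZt.
have {}vZtX : vI P (fun x => Zt x * ex pi' x) = 0.
  by rewrite vZtX /dotp big1 // => i _; rewrite vZt mulr0.
have [iX vX] := integ_ex pi'.
have mX := integ_meas iX.
set X := ex pi' in iZtX vZtX iX vX mX *.
pose A := [set x | X x < 0].
have mA : measurable A.
  have := mX measurableT _ (measurable_itv `]-oo, (0:R)[); rewrite setTI.
  suff -> : A = X @^-1` `]-oo, 0[%classic by [].
  by apply/seteqP; split => x /=; rewrite in_itv /=.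
have [PA0|PAn0] := eqVneq (P A) 0%E.
  have aeX : {ae P, forall x, 0 <= X x}.
    exists A; split => // x /= h; rewrite /A /= ltNge; exact/negP.
  have aeZX : {ae P, forall x, 0 <= Zt x * X x}.
    by apply: filterS2 posZt aeX => x a1 a2; apply: mulr_ge0 => //; apply: ltW.
  have z := vI_eq0 iZtX aeZX vZtX.
  have aeX0 : {ae P, forall x, X x = (fun _ => 0) x}.
    apply: filterS2 posZt z => x h1' /eqP; rewrite mulf_eq0 => /orP[/eqP h|/eqP //].
    by move: h1'; rewrite h ltxx.
  have [_ e] := vI_ae iX (measurable_cst _) aeX0.
  by move: mpos; rewrite -vX e vI_cst ltxx.
have PAfin := fin_num_measure P A mA.
pose pA := fine (P A).
have PAE : P A = pA%:E by rewrite /pA fineK.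
have pA0 : 0 < pA.
  rewrite lt_def; apply/andP; split.
    by apply: contra PAn0 => /eqP h; rewrite PAE h.
  by rewrite -lee_fin -PAE measure_ge0.
have iInd : integ P (\1_A : T -> R) := integrable_indic P mA.
have vInd : vI P (\1_A : T -> R) = pA.
  by apply: EFin_inj; rewrite -integE // integral_indic // setIT.
pose Z0 := fun x => pA^-1 * (\1_A x : R).
have iZ0 : integ P Z0 := integZ _ iInd.
have dZ0 : Dset P Z0.
  split => //; split.
    by apply: nearW => x; rewrite /Z0 mulr_ge0 // ?invr_ge0 ?(ltW pA0) // indicE ler0n.
  by rewrite integE // /Z0 vIZ // vInd mulVf // gt_eqF.
have bZ0 : ess_bounded P Z0.
  exists pA^-1; apply: nearW => x; rewrite /Z0 normrM ger0_norm ?invr_ge0 ?(ltW pA0) //.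
  rewrite indicE; case: (x \in A); rewrite ?normr1 ?mulr1 ?normr0 ?mulr0 //.
  by rewrite invr_ge0 ltW.
pose g := fun x => (\1_A x : R) * X x.
have ig : integ P g.
  apply: le_integrable iX => //.
    apply/measurable_EFinP; apply: measurable_funM => //; exact: measurable_indic.
  move=> x _ /=; rewrite lee_fin normrM indicE; case: (x \in A) => /=.
    by rewrite normr1 mul1r.
  by rewrite normr0 mul0r.
have gle : forall x, g x <= 0.
  move=> x; rewrite /g indicE; case: (boolP (x \in A)) => /=.
    by rewrite mul1r inE /A /= => /ltW.
  by rewrite mul0r.
have gneg : vI P g < 0.
  have g0 : vI P g <= 0.
    rewrite -(vI_cst (P:=P) 0); apply: vI_le => //; first exact: integ_cst.
    exact: nearW.
  rewrite lt_def g0 andbT; apply/eqP => vg0.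
  have aeg : {ae P, forall x, 0 <= - g x} by apply: nearW => x; rewrite oppr_ge0.
  have := vI_eq0 (integN ig) aeg; rewrite vIN // -vg0 oppr0 => /(_ erefl) [N [mN PN0 sub]].
  move/eqP: PAn0; apply; apply/eqP; rewrite eq_le measure_ge0 andbT -PN0.
  apply: le_measure; rewrite ?inE //.
  move=> x Ax; apply: sub => /= h.
  move: h; rewrite /g indicE mem_set // mul1r => /eqP; rewrite oppr_eq0 => /eqP h.
  by move: Ax; rewrite /A /= h ltxx.
have iZ0X : integ P (fun x => Z0 x * X x).
  by apply: integ_ext (integZ pA^-1 ig) => x; rewrite /Z0 /g mulrA.
have vZ0X : vI P (fun x => Z0 x * X x) = pA^-1 * vI P g.
  by rewrite -vIZ //; apply: vI_ext => x; rewrite /Z0 /g mulrA.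
pose c := - vI P (fun x => Z0 x * X x).
have c0 : 0 < c.
  by rewrite /c vZ0X oppr_gt0 pmulr_rlt0 // invr_gt0.
have iaX : integ P (fun x => `|X x|).
  apply: le_integrable iX => //.
    apply/measurable_EFinP; apply: measurableT_comp => //; exact: normr_measurable.
  by move=> x _ /=; rewrite lee_fin normr_id.
pose K := vI P (fun x => `|X x|).
have K0 : 0 <= K by apply: vI_ge0 => //; apply: nearW => x.
pose eps := c / (2 * (K + 1)).
have eps0 : 0 < eps by rewrite /eps divr_gt0 //; lra.
have epsK : eps * (2 * (K + 1)) = c by rewrite /eps divfK // gt_eqF //; lra.
have [E [[EsubD dense] hE]] := int Zt QtZt.
have [Z' EZ' aeZ'] := dense Z0 dZ0 bZ0 eps eps0.
have [[iZ' _] _] := EsubD Z' EZ'.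
have [la [/andP[la0 la1] QW]] := hE Z' EZ'.
have [iWX vWX] := integ_Zex pi' (goodQ QW).
have WX0 := nonneg _ QW; rewrite -vWX in WX0.
pose h := fun x => Z' x * X x.
have hE' : forall x, la^-1 * ((mix la Z' Zt) x * X x - (1 - la) * (Zt x * X x)) = h x.
  move=> x; rewrite /mix /h; field; rewrite gt_eqF //.
have ih : integ P h.
  move: (@integ_ext _ _ _ P _ h hE'); apply; apply: integZ; apply: integB => //; exact: integZ.
have vh : vI P h = la^-1 * vI P (fun x => mix la Z' Zt x * X x).
  rewrite -(vI_ext hE') vIZ; last by apply: integB => //; exact: integZ.
  by rewrite vIB ?vIZ ?vZtX ?mulr0 ?subr0 //; exact: integZ.
have h0 : 0 <= vI P h by rewrite vh mulr_ge0 // invr_ge0 ltW.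
have hub : vI P h <= vI P (fun x => Z0 x * X x + eps * `|X x|).
  apply: vI_le => //; first by apply: integD => //; exact: integZ.
  apply: filterS aeZ' => x hx; rewrite /h.
  have : (Z' x - Z0 x) * X x <= eps * `|X x|.
    apply: le_trans (ler_norm _) _; rewrite normrM ler_wpM2r // distrC //.
  lra.
rewrite (vID iZ0X (integZ eps iaX)) in hub.
rewrite vIZ // -/K -/c in hub.
have : eps * K < c by rewrite -epsK; nra.
have cE : c = - vI P (fun x => Z0 x * X x) by [].
lra.
Qed.


Hypothesis hPi : forall pi, Pirho0 P Q r Ret pi <-> forall i, pi i = 0.
Hypothesis hd : (0 < d)%N.

Lemma sep_d (C : set 'rV[R]_d) : convexS C -> ~ C 0 ->
  exists p : 'rV[R]_d, p != 0 /\ forall c, C c -> 0 <= dotr p c.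
Proof. by move: C; case: d hd => // n _ C; apply: sep. Qed.

Lemma imp3 : ~ rho_arbitrage P Q r Ret -> forall Qt, Qt `<=` Q -> Qt !=set0 ->
  condPOS P Qt -> condMIX Q Qt -> condINT P Q Qt -> (Qt `&` Pset P r Ret) !=set0.
Proof.
move=> NA Qt sQ [Zt0 QtZt0] pos mixc _.
have [pi0 [m0 eff]] := contrapT NA.
have claimA : forall pi, 0 < dotp pi (fun _ => 1) -> exists2 Z, Q Z & dotp pi Z < 0.
  move=> pi mp; apply: contrapT => hno.
  have nn : forall Z, Q Z -> 0 <= dotp pi Z.
    move=> Z QZ; rewrite leNgt; apply/negP => h; apply: hno; by exists Z.
  apply: eff; exists (fun i => pi0 i + pi i) => /=; rewrite !mean_ex dotpD.
  split; first by rewrite lee_fin lerDl ltW.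
  split; last by left; rewrite lte_fin ltrDl.
  apply: ge_ereal_sup => _ [Z QZ <-]; rewrite EmZ_Q // dotpD.
  apply: le_trans (rho_ge pi0 QZ); rewrite lee_fin; have := nn Z QZ; lra.
apply: contrapT => hempty.
have notP : forall Z, Qt Z -> exists i, vv Z i != 0.
  move=> Z QtZ; apply: contrapT => h; apply: hempty; exists Z; split => //.
  split; last exact: pos.
  split; first by apply: hQD; apply: sQ.
  move=> i; split; first by have := goodQ (sQ _ QtZ) i.
  have : vv Z i = 0 by apply: contrapT => /eqP hi; apply: h; exists i.
  by rewrite /vv /vI => h0; rewrite (integE (goodQ (sQ _ QtZ) i)) /vI h0.
pose V := [set v : 'rV[R]_d | exists2 Z, Qt Z & v = \row_i vv Z i].
have cV : convexS V.
  move=> x y t [Z1 Q1 ->] [Z2 Q2 ->] /andP[t0 t1].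
  have [->|tn0] := eqVneq t 0; first by rewrite scale0r add0r subr0 scale1r; exists Z2.
  have [->|tn1] := eqVneq t 1; first by rewrite scale1r subrr scale0r addr0; exists Z1.
  exists (mix t Z1 Z2).
    by apply: mixc => //; [exact: sQ | apply/andP; split; rewrite lt_def ?tn0 ?t0 // eq_sym tn1].
  apply/rowP => i; rewrite !mxE vv_mix //; apply: goodQ; apply: sQ => //; exact: mixc.
have nV : ~ V 0.
  move=> [Z QtZ /rowP e]; have [i /eqP] := notP Z QtZ; apply.
  by have := e i; rewrite !mxE => <-.
have [p [p0 hp]] := sep_d cV nV.
pose pi := fun i => p 0 i.
have hQt : forall Z, Qt Z -> 0 <= dotp pi Z.
  move=> Z QtZ; have := hp (\row_i vv Z i) (ex_intro2 _ _ Z QtZ erefl).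
  by rewrite /dotr /dotp; under eq_bigr do rewrite mxE.
have gZt0 := goodQ (sQ _ QtZt0).
have hQ : forall Z, Q Z -> 0 <= dotp pi Z.
  move=> Z QZ; rewrite leNgt; apply/negP => hneg.
  pose a := - dotp pi Z; pose b := dotp pi Zt0.
  have a0 : 0 < a by rewrite /a oppr_gt0.
  have b0 : 0 <= b := hQt Zt0 QtZt0.
  pose l := (b + 1) / (a + b + 1).
  have l0 : 0 < l by rewrite /l divr_gt0 //; lra.
  have l1 : l < 1 by rewrite /l ltr_pdivrMr; lra.
  have := hQt _ (mixc Z Zt0 l QZ QtZt0 (ltac:(by rewrite l0 l1))).
  rewrite dotp_mix //; last exact: goodQ.
  have le : l * (a + b + 1) = b + 1 by rewrite /l divfK // gt_eqF //; lra.
  have -> : dotp pi Z = - a by rewrite /a opprK.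
  rewrite -/b; nra.
have m0' : 0 <= dotp pi (fun _ => 1) := hQ _ hQ1.
have [mpos|m00] := ltrP 0 (dotp pi (fun _ => 1)).
  by have [Z QZ] := claimA pi mpos; rewrite ltNge hQ.
have m00' : dotp pi (fun _ => 1) = 0 by apply/eqP; rewrite eq_le m00 m0'.
have rle : (rho P Q (ex pi) <= 0%:E)%E.
  by apply: rho_le => Z QZ; rewrite oppr_le0; exact: hQ.
have Prho : Pirho0 P Q r Ret pi.
  split; first by rewrite /Pi0 mean_ex m00'.
  split; first by apply: le_lt_trans rle _; rewrite ltey.
  move=> pi' h0; apply: le_trans rle _.
  have : dotp pi' (fun _ => 1) = 0 by apply: EFin_inj; rewrite -mean_ex.
  move=> e; have := rho_ge pi' hQ1; rewrite e oppr0; exact.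
have := (hPi pi).1 Prho => hz.
by move/eqP: p0; apply; apply/rowP => i; rewrite mxE; exact: hz.
Qed.

End Main.
Theorem theorem4p20 (d0 : measure_display) (T : measurableType d0)
  (R : realType) (P : probability T R) (d : nat) (r : R)
  (S0 : 'I_d -> R) (S1 : 'I_d -> T -> R) (Q : set (T -> R)) :
  (* market standing assumptions *)
  -1 < r ->
  (forall i, 0 < S0 i) ->
  (forall i, measurable_fun setT (S1 i)) ->
  nonredundant P r S0 S1 ->
  (forall i, P.-integrable setT (EFin \o ret S0 S1 i)) ->
  (exists i, (\int[P]_x (ret S0 S1 i x)%:E != r%:E)%E) ->
  (* Q is a convex subset of D containing 1 *)
  Q `<=` Dset P ->
  (forall Z1 Z2 (l : R), Q Z1 -> Q Z2 -> 0 <= l <= 1 -> Q (mix l Z1 Z2)) ->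
  Q (fun _ => 1) ->
  (* hypotheses of the theorem *)
  condI P (ret S0 S1) Q ->
  (forall pi, Pirho0 P Q r (ret S0 S1) pi <-> forall i, pi i = 0) ->
  Qmax P Q !=set0 ->
  (~ rho_arbitrage P Q r (ret S0 S1) <->
   exists Qt, Qt `<=` Q /\ Qt !=set0 /\ condPOS P Qt /\ condMIX Q Qt /\ condINT P Q Qt
                /\ (Qt `&` Pset P r (ret S0 S1)) !=set0)
  /\
  ((exists Qt, Qt `<=` Q /\ Qt !=set0 /\ condPOS P Qt /\ condMIX Q Qt /\ condINT P Q Qt
                /\ (Qt `&` Pset P r (ret S0 S1)) !=set0) <->
   (forall Qt, Qt `<=` Q -> Qt !=set0 -> condPOS P Qt -> condMIX Q Qt ->
      condINT P Q Qt -> (Qt `&` Pset P r (ret S0 S1)) !=set0)).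
Proof.
move=> _ _ _ _ _ [i0 _] hQD hmix hQ1 hI hPi hmax.
have hd : (0 < d)%N := leq_ltn_trans (leq0n _) (ltn_ord i0).
have [s1 [p1 [m1 n1]]] := imp1 hQD hmix.
have CB : (forall Qt, Qt `<=` Q -> Qt !=set0 -> condPOS P Qt -> condMIX Q Qt ->
      condINT P Q Qt -> (Qt `&` Pset P r (ret S0 S1)) !=set0) ->
    exists Qt, Qt `<=` Q /\ Qt !=set0 /\ condPOS P Qt /\ condMIX Q Qt /\ condINT P Q Qt
                /\ (Qt `&` Pset P r (ret S0 S1)) !=set0.
  by move=> H; exists (Qmax P Q); do 5 (split => //); exact: H.
have BNA := imp2 hQD hQ1 hI.
have NAC := imp3 hQD hQ1 hI hPi hd.
split; split.
- by move=> na; apply: CB; exact: NAC.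
- exact: BNA.
- by move=> b; apply: NAC; exact: BNA.
- exact: CB.
Qed.
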